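(* Let $W$ be a one-dimensional two-sided Brownian motion on the canonical space $(\Omega,\mathcal F,P)$ with shift $(\theta_t\omega)(s)=W(t+s)-W(t)$, and consider the Stratonovich SDE on $\mathbb R^2$ $$dx=(x-y-x(x^2+y^2))\,dt+x\circ dW_t,\qquad dy=(x+y-y(x^2+y^2))\,dt+y\circ dW_t.$$ In polar coordinates $x=\rho\cos 2\pi\alpha$, $y=\rho\sin2\pi\alpha$ its solution is $\rho(t,\alpha_0,\rho_0,\omega)=\rho_0e^{t+W_t(\omega)}\big(1+2\rho_0^2\int_0^te^{2(s+W_s(\omega))}ds\big)^{-1/2}$, $\alpha(t)=\alpha_0+t/(2\pi)$, defining a random dynamical system $\tilde\Phi(t,\omega)$ on $\mathbb R^2$. Let $\rho^*(\omega)=\big(2\int_{-\infty}^0e^{2s+2W_s(\omega)}ds\big)^{-1/2}$ and, for fixed $\alpha\in[0,1)$, $\psi^\omega(t)=(\rho^*(\omega)\cos(2\pi\alpha+t),\ \rho^*(\omega)\sin(2\pi\alpha+t))$. Then: $\rho(t,\alpha_0,\rho^*(\omega),\omega)=\rho^*(\theta_t\omega)$ for all $t$; the circle $L^\omega=\{\rho=\rho^*(\omega)\}$ satisfies $\tilde\Phi(t,\omega)L^\omega=L^{\theta_t\omega}$; $\psi^\omega(t+2\pi)=\psi^\omega(t)$ and $\tilde\Phi(t,\omega)\psi^\omega(0)=\psi^{\theta_t\omega}(t)$ for all $t$, so $\psi$ is a random periodic solution of period $2\pi$ (with random periodic curve of winding number $1$ on the cylinder $[0,1]\times\mathbb R$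 in the coordinates $(\alpha,\rho)$); and if $x(0)^2+y(0)^2\neq0$, then $x^2(t,\theta_{-t}\omega)+y^2(t,\theta_{-t}\omega)\to\rho^*(\omega)^2$ as $t\to\infty$.
   Context: A random periodic solution of a random dynamical system $\Phi$ over $(\Omega,\mathcal F,P,(\theta_t))$ with state space $\mathcal H$ is an $\mathcal F$-measurable $\psi:\Omega\times\mathbb R\to\mathcal H$, periodic in $t$ with period $T$, such that $\psi^\omega(t+T)=\psi^\omega(t)$ and $\Phi_t^\omega(\psi^\omega(t_0))=\psi^{\theta_t\omega}(t+t_0)$ for all $t,t_0$. Here $x(t,\omega),y(t,\omega)$ denote the solution components started from $(x(0),y(0))$, evaluated along the noise path $\omega$. *)

(* Defs.v *)
From Stdlib Require Import Reals Lra ClassicalEpsilon.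
Open Scope R_scope.

(* A noise path omega of the canonical two-sided Brownian space, identified with
   W = omega : R -> R.  [bm_path W] collects the pathwise properties holding on a
   theta-invariant set of full Wiener measure: continuity, W(0)=0, and the strong
   law of large numbers W(s)/s -> 0 as |s| -> infinity. *)
Definition bm_path (W : R -> R) : Prop :=
  (forall s, continuity_pt W s) /\ W 0 = 0 /\
  (forall eps, eps > 0 -> exists M, forall s, Rabs s >= M -> Rabs (W s) <= eps * Rabs s).

Definition shift (t : R) (W : R -> R) : R -> R := fun s => W (t + s) - W t.

(* Riemann integral \int_a^b f (value of RiemannInt; arbitrary if not integrable). *)
Definition RInt (f : R -> R) (a b : R) : R :=
  epsilon (inhabits 0)
    (fun v => exists pr : Riemann_integrable f a b, RiemannInt pr = v).

Definition RInt_minf0 (f : R -> R) : R :=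
  epsilon (inhabits 0)
    (fun l => forall eps, eps > 0 -> exists M, forall T, T >= M ->
        Rabs (RInt f (- T) 0 - l) < eps).

Definition rho_star (W : R -> R) : R :=
  / sqrt (2 * RInt_minf0 (fun s => exp (2 * s + 2 * W s))).

Definition rho_sol (t alpha0 rho0 : R) (W : R -> R) : R :=
  rho0 * exp (t + W t)
  / sqrt (1 + 2 * rho0 ^ 2 * RInt (fun s => exp (2 * (s + W s))) 0 t).

Definition alpha_sol (t alpha0 : R) : R := alpha0 + t / (2 * PI).

(* The RDS tilde Phi(t, omega) on R^2: the point with polar coordinates
   (alpha0, rho0) is sent to the point with polar coordinates
   (alpha_sol t alpha0, rho_sol t alpha0 rho0 W). *)
Definition Phi (t : R) (W : R -> R) (p : R * R) : R * R :=
  let (x, y) := p in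
  let g := exp (t + W t)
           / sqrt (1 + 2 * (x ^ 2 + y ^ 2) * RInt (fun s => exp (2 * (s + W s))) 0 t) in
  (g * (x * cos t - y * sin t), g * (x * sin t + y * cos t)).

Definition Lcirc (W : R -> R) (p : R * R) : Prop :=
  sqrt (fst p ^ 2 + snd p ^ 2) = rho_star W.

Definition psi (alpha : R) (W : R -> R) (t : R) : R * R :=
  (rho_star W * cos (2 * PI * alpha + t), rho_star W * sin (2 * PI * alpha + t)).

(* Main.v *)
Require Import Defs.
From Stdlib Require Import Reals Lra ClassicalEpsilon Classical FunctionalExtensionality.
From Coquelicot Require Import Coquelicot.
Open Scope R_scope.

Lemma cpt_cont (g : R -> R) x : continuity_pt g x -> continuous g x.
Proof. intro H. apply continuity_pt_filterlim. exact H. Qed.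

Lemma RInt_conv (g : R -> R) : (forall s, continuity_pt g s) ->
  forall a b, ex_RInt g a b /\ Defs.RInt g a b = RInt g a b.
Proof.
  intros Hg a b.
  assert (He : ex_RInt g a b).
  { apply (@ex_RInt_continuous R_CompleteNormedModule). intros z _. apply cpt_cont, Hg. }
  split; [exact He|].
  pose proof (ex_RInt_Reals_0 _ _ _ He) as pr.
  unfold Defs.RInt.
  destruct (epsilon_spec (inhabits 0)
     (fun v => exists pr : Riemann_integrable g a b, RiemannInt pr = v)) as [pr' Hpr'].
  { exists (RiemannInt pr). exists pr. reflexivity. }
  rewrite <- Hpr'. symmetry. apply RInt_Reals.
Qed.

Definition f (W : R -> R) (s : R) := exp (2 * (s + W s)).

Lemma cont_f W : (forall s, continuity_pt W s) -> forall s, continuity_pt (f W) s.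
Proof.
  intros HW s. unfold f.
  apply (continuity_pt_comp (fun s => 2 * (s + W s)) exp).
  - apply continuity_pt_mult. apply continuity_pt_const; intros ??; reflexivity.
    apply continuity_pt_plus. apply continuity_pt_id. apply HW.
  - apply derivable_continuous_pt, derivable_pt_exp.
Qed.

Lemma cont_shift W t : (forall s, continuity_pt W s) -> forall s, continuity_pt (shift t W) s.
Proof.
  intros HW s. unfold shift.
  apply continuity_pt_minus.
  - apply (continuity_pt_comp (fun s => t + s) W).
    apply continuity_pt_plus. apply continuity_pt_const; intros ??; reflexivity.
    apply continuity_pt_id. apply HW.
  - apply continuity_pt_const; intros ??; reflexivity.
Qed.

Lemma RInt_shift (g : R -> R) c a b : (forall s, continuity_pt g s) ->
  RInt (fun s => g (s + c)) a b = RInt g (a + c) (b + c).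
Proof.
  intros Hg.
  replace (a + c) with (1 * a + c) by ring. replace (b + c) with (1 * b + c) by ring.
  rewrite <- RInt_comp_lin.
  - apply RInt_ext. intros x _. unfold scal; simpl; unfold mult; simpl. rewrite Rmult_1_l. f_equal. ring.
  - apply (RInt_conv g Hg).
Qed.

Lemma RInt_exp a b : RInt exp a b = exp b - exp a.
Proof.
  apply is_RInt_unique. apply (is_RInt_derive exp exp).
  - intros x _. apply is_derive_exp.
  - intros x _. apply cpt_cont. apply derivable_continuous_pt, derivable_pt_exp.
Qed.

Definition conv (g : R -> R) (l : R) := forall eps, eps > 0 -> exists M, forall T, T >= M ->
        Rabs (Defs.RInt g (- T) 0 - l) < eps.

Lemma minf0_unique g l : conv g l -> RInt_minf0 g = l.
Proof.
  intros Hl. unfold RInt_minf0.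
  pose proof (epsilon_spec (inhabits 0) (conv g) (ex_intro _ l Hl)) as H0.
  change (epsilon (inhabits 0) (conv g) = l).
  set (l' := epsilon (inhabits 0) (conv g)) in *.
  destruct (Req_dec l' l) as [E|E]; [exact E|exfalso].
  assert (Hp : Rabs (l' - l) / 2 > 0) by (assert (l' - l <> 0) by lra; pose proof (Rabs_pos_lt _ H); lra).
  destruct (Hl _ Hp) as [M1 H1]. destruct (H0 _ Hp) as [M2 H2].
  specialize (H1 (Rmax M1 M2) (Rle_ge _ _ (Rmax_l _ _))).
  specialize (H2 (Rmax M1 M2) (Rle_ge _ _ (Rmax_r _ _))).
  set (v := Defs.RInt g (- Rmax M1 M2) 0) in *.
  assert (Rabs (l' - l) <= Rabs (v - l) + Rabs (v - l')).
  { replace (l' - l) with ((v - l) - (v - l')) by ring. apply Rabs_triang_inv2 || 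
    (eapply Rle_trans; [apply Rabs_triang|]; rewrite Rabs_Ropp; lra). }
  lra.
Qed.

Lemma chasles (g : R -> R) a b c : (forall s, continuity_pt g s) ->
  RInt g a b + RInt g b c = RInt g a c.
Proof.
  intros Hg. apply (RInt_Chasles g a b c); apply (RInt_conv g Hg).
Qed.

Lemma f_pos W s : 0 < f W s.
Proof. unfold f. apply exp_pos. Qed.

Lemma fint_pos W a b : (forall s, continuity_pt W s) -> a < b -> 0 < RInt (f W) a b.
Proof.
  intros HW Hab. apply RInt_gt_0; auto.
  intros x _. apply f_pos. intros x _. apply cpt_cont, cont_f, HW.
Qed.

Lemma fint_nneg W a b : (forall s, continuity_pt W s) -> a <= b -> 0 <= RInt (f W) a b.
Proof.
  intros HW Hab. apply RInt_ge_0; auto. apply (RInt_conv _ (cont_f W HW)).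
  intros x _. left; apply f_pos.
Qed.

Lemma F_mono W T1 T2 : (forall s, continuity_pt W s) -> T1 <= T2 ->
  RInt (f W) (- T1) 0 <= RInt (f W) (- T2) 0.
Proof.
  intros HW H. rewrite <- (chasles (f W) (-T2) (-T1) 0 (cont_f W HW)).
  pose proof (fint_nneg W (-T2) (-T1) HW ltac:(lra)). lra.
Qed.

Lemma exists_I W : bm_path W -> exists I, 0 < I /\ conv (f W) I /\
   (forall T, 0 <= T -> RInt (f W) (- T) 0 <= I).
Proof.
  intros [HWc [HW0 HWl]].
  destruct (HWl (/2) ltac:(lra)) as [M0 HM0].
  set (M := Rmax M0 1).
  set (F := fun T => RInt (f W) (- T) 0).
  assert (Hb : forall T, 0 <= T -> F T <= 1 + F M).
  { intros T HT. destruct (Rle_dec T M) as [HTM|HTM].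
    - pose proof (F_mono W T M HWc HTM). unfold F.
      pose proof (fint_nneg W (-M) 0 HWc ltac:(unfold M; pose proof (Rmax_r M0 1); lra)). lra.
    - unfold F. rewrite <- (chasles (f W) (-T) (-M) 0 (cont_f W HWc)).
      assert (RInt (f W) (-T) (-M) <= RInt exp (-T) (-M)).
      { apply RInt_le. lra. apply (RInt_conv _ (cont_f W HWc)).
        apply (RInt_conv exp). intros; apply derivable_continuous_pt, derivable_pt_exp.
        intros x Hx. unfold f. destruct (Req_dec (2 * (x + W x)) x) as [E|E].
        rewrite E; lra. left. apply exp_increasing.
        assert (Rabs (W x) <= /2 * Rabs x).
        { apply HM0. rewrite Rabs_left by (unfold M in *; pose proof (Rmax_r M0 1); lra).
          pose proof (Rmax_l M0 1). fold M in H. lra. }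
        rewrite (Rabs_left x) in H by (unfold M in *; pose proof (Rmax_r M0 1); lra).
        pose proof (Rle_abs (W x)). lra. }
      rewrite RInt_exp in H. pose proof (exp_pos (-T)).
      assert (exp (-M) <= 1).
      { rewrite <- exp_0. destruct (Req_dec M 0). rewrite H1, Ropp_0; lra.
        left. apply exp_increasing. unfold M; pose proof (Rmax_r M0 1); lra. }
      fold (F M). lra. }
  set (E := fun x => exists T, 0 <= T /\ x = F T).
  assert (HEb : bound E).
  { exists (1 + F M). intros x [T [HT ->]]. apply Hb, HT. }
  destruct (completeness E HEb (ex_intro _ (F 0) (ex_intro _ 0 (conj (Rle_refl 0) eq_refl))))
    as [l [Hub Hlub]].
  assert (Hle : forall T, 0 <= T -> F T <= l).
  { intros T HT. apply Hub. exists T; split; auto. }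
  exists l. split; [|split; [|exact Hle]].
  - pose proof (Hle 1 ltac:(lra)). pose proof (fint_pos W (- (1)) 0 HWc ltac:(lra)).
    unfold F in H. lra.
  - intros eps Heps.
    assert (exists T0, 0 <= T0 /\ l - eps < F T0) as [T0 [HT0 HF0]].
    { apply NNPP. intro Hn. assert (l <= l - eps); [|lra].
      apply Hlub. intros x [T [HT ->]]. destruct (Rle_dec (F T) (l - eps)); auto.
      exfalso. apply Hn. exists T. split; auto. lra. }
    exists T0. intros T HT.
    rewrite (proj2 (RInt_conv _ (cont_f W HWc) _ _)).
    pose proof (F_mono W T0 T HWc ltac:(lra)). pose proof (Hle T ltac:(lra)).
    unfold F in *. rewrite Rabs_left1 by lra. lra.
Qed.

Lemma rho_star_eq W I : (forall s, continuity_pt W s) -> conv (f W) I -> rho_star W = / sqrt (2 * I).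
Proof.
  intros HW H. unfold rho_star.
  replace (fun s => exp (2 * s + 2 * W s)) with (f W).
  rewrite (minf0_unique _ _ H). reflexivity.
  apply functional_extensionality. intro s. unfold f. f_equal. ring.
Qed.

Lemma f_shift W t s : f (shift t W) s = exp (-2 * (t + W t)) * f W (s + t).
Proof. unfold f, shift. rewrite <- exp_plus. f_equal. rewrite (Rplus_comm s t). ring. Qed.

Lemma conv_shift W I t : (forall s, continuity_pt W s) -> conv (f W) I ->
  conv (f (shift t W)) (exp (-2 * (t + W t)) * (I + RInt (f W) 0 t)).
Proof.
  intros HW H eps Heps. set (c := exp (-2 * (t + W t))).
  assert (Hc : 0 < c) by apply exp_pos.
  destruct (H (eps / c)) as [M HM]. apply Rdiv_lt_0_compat; lra.
  exists (M + t). intros T HT.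
  rewrite (proj2 (RInt_conv _ (cont_f _ (cont_shift W t HW)) _ _)).
  rewrite (RInt_ext _ (fun s => scal c (f W (s + t)))).
  2:{ intros x _. rewrite f_shift. reflexivity. }
  rewrite (@RInt_scal R_CompleteNormedModule (fun s => f W (s + t))).
  2:{ apply (RInt_conv (fun s => f W (s + t))). intro s.
      apply (continuity_pt_comp (fun s => s + t) (f W)).
      apply continuity_pt_plus. apply continuity_pt_id. apply continuity_pt_const; intros ??; reflexivity.
      apply cont_f, HW. }
  rewrite (RInt_shift (f W) t (-T) 0 (cont_f W HW)).
  rewrite <- (chasles (f W) (-T + t) 0 (0 + t) (cont_f W HW)).
  rewrite Rplus_0_l.
  specialize (HM (T - t) ltac:(lra)).
  rewrite (proj2 (RInt_conv _ (cont_f W HW) _ _)) in HM.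
  replace (- (T - t)) with (-T + t) in HM by ring.
  unfold scal; simpl; unfold mult; simpl.
  replace (c * (RInt (f W) (- T + t) 0 + RInt (f W) 0 t) - c * (I + RInt (f W) 0 t))
    with (c * (RInt (f W) (- T + t) 0 - I)) by ring.
  rewrite Rabs_mult, (Rabs_right c) by lra.
  apply (Rmult_lt_compat_l c) in HM; auto. field_simplify in HM; lra.
Qed.


Lemma sq_inj x y : 0 <= x -> 0 <= y -> x ^ 2 = y ^ 2 -> x = y.
Proof. intros Hx Hy H. rewrite <- (sqrt_pow2 x Hx), <- (sqrt_pow2 y Hy), H. reflexivity. Qed.

Lemma IJ_pos W I : (forall s, continuity_pt W s) -> 0 < I ->
  (forall T, 0 <= T -> RInt (f W) (- T) 0 <= I) -> forall t, 0 < I + RInt (f W) 0 t.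
Proof.
  intros HW HI Hle t. destruct (Rle_dec 0 t).
  - pose proof (fint_nneg W 0 t HW r). lra.
  - pose proof (Hle (- t + 1) ltac:(lra)).
    rewrite <- (chasles (f W) _ t 0 (cont_f W HW)) in H.
    pose proof (chasles (f W) 0 t 0 (cont_f W HW)). rewrite RInt_point in H0.
    assert (Hlt : - (- t + 1) < t) by lra. pose proof (fint_pos W (- (- t + 1)) t HW Hlt).
    assert (Hz : RInt (f W) 0 t + RInt (f W) t 0 = 0) by exact H0. lra.
Qed.

Lemma claim1 W I t a : (forall s, continuity_pt W s) -> 0 < I -> conv (f W) I ->
  (forall T, 0 <= T -> RInt (f W) (- T) 0 <= I) ->
  rho_sol t a (rho_star W) W = rho_star (shift t W).
Proof.
  intros HW HI HC Hle.
  rewrite (rho_star_eq _ _ (cont_shift W t HW) (conv_shift W I t HW HC)).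
  rewrite (rho_star_eq _ _ HW HC).
  unfold rho_sol. change (fun s => exp (2 * (s + W s))) with (f W).
  rewrite (proj2 (RInt_conv _ (cont_f W HW) _ _)).
  set (J := RInt (f W) 0 t). pose proof (IJ_pos W I HW HI Hle t) as HIJ. fold J in HIJ.
  set (e := exp (t + W t)). set (c := exp (-2 * (t + W t))).
  assert (Hce : c * e ^ 2 = 1).
  { unfold c, e. simpl. rewrite Rmult_1_r, <- !exp_plus. rewrite <- exp_0. f_equal. ring. }
  assert (He : 0 < e) by apply exp_pos. assert (Hc : 0 < c) by apply exp_pos.
  set (s1 := sqrt (2 * I)).
  assert (Hs1 : 0 < s1) by (apply sqrt_lt_R0; lra).
  assert (Hs1q : s1 ^ 2 = 2 * I) by (apply pow2_sqrt; lra).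
  assert (Hinv : (/ s1) ^ 2 = / (2 * I)) by (rewrite <- Hs1q; field; lra).
  assert (HX : 0 < 1 + 2 * (/ s1) ^ 2 * J).
  { rewrite Hinv. replace (1 + 2 * / (2 * I) * J) with ((I + J) / I) by (field; lra).
    apply Rdiv_lt_0_compat; lra. }
  set (s2 := sqrt (1 + 2 * (/ s1) ^ 2 * J)).
  assert (Hs2 : 0 < s2) by (apply sqrt_lt_R0; lra).
  assert (Hs2q : s2 ^ 2 = 1 + 2 * (/ s1) ^ 2 * J) by (apply pow2_sqrt; lra).
  set (s3 := sqrt (2 * (c * (I + J)))).
  assert (Hs3 : 0 < s3) by (apply sqrt_lt_R0; apply Rmult_lt_0_compat; [lra|]; apply Rmult_lt_0_compat; lra).
  assert (Hs3q : s3 ^ 2 = 2 * (c * (I + J))) by (apply pow2_sqrt; nra).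
  assert (Hk : s3 * e = s1 * s2).
  { apply sq_inj; try nra.
    rewrite Rpow_mult_distr, Hs3q, Rpow_mult_distr, Hs2q.
    replace (2 * (c * (I + J)) * e ^ 2) with (2 * (I + J) * (c * e ^ 2)) by ring.
    rewrite Hce, Hinv, Hs1q. field. lra. }
  apply (Rmult_eq_reg_r (s1 * s2 * s3)); [|apply Rgt_not_eq; apply Rmult_lt_0_compat; [nra|lra]].
  rewrite <- Hk at 2. field. repeat split; lra.
Qed.

Definition gfac t W r2 := exp (t + W t)
  / sqrt (1 + 2 * r2 * Defs.RInt (fun s => exp (2 * (s + W s))) 0 t).

Lemma Phi_eq t W x y : Phi t W (x, y) =
  (gfac t W (x ^ 2 + y ^ 2) * (x * cos t - y * sin t),
   gfac t W (x ^ 2 + y ^ 2) * (x * sin t + y * cos t)).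
Proof. reflexivity. Qed.

Lemma rho_sol_g t a r W : rho_sol t a r W = gfac t W (r ^ 2) * r.
Proof. unfold rho_sol, gfac, Rdiv. ring. Qed.

Lemma trig1 u : cos u ^ 2 + sin u ^ 2 = 1.
Proof. pose proof (sin2_cos2 u). unfold Rsqr in H. simpl. lra. Qed.

Lemma circ_norm r u : (r * cos u) ^ 2 + (r * sin u) ^ 2 = r ^ 2.
Proof. pose proof (trig1 u). replace ((r * cos u) ^ 2 + (r * sin u) ^ 2) with (r^2 * (cos u ^ 2 + sin u ^ 2)) by ring. rewrite H. ring. Qed.

Lemma rho_star_pos W I : conv (f W) I -> 0 < I -> (forall s, continuity_pt W s) -> 0 < rho_star W.
Proof. intros HC HI HW. rewrite (rho_star_eq W I HW HC). apply Rinv_0_lt_compat, sqrt_lt_R0. lra. Qed.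

Lemma claim5 W I alpha t t0 : (forall s, continuity_pt W s) -> 0 < I -> conv (f W) I ->
  (forall T, 0 <= T -> RInt (f W) (- T) 0 <= I) ->
  Phi t W (psi alpha W t0) = psi alpha (shift t W) (t + t0).
Proof.
  intros HW HI HC Hle. unfold psi at 1. rewrite Phi_eq, circ_norm.
  pose proof (claim1 W I t 0 HW HI HC Hle) as H1. rewrite rho_sol_g in H1.
  unfold psi. rewrite <- H1.
  replace (2 * PI * alpha + (t + t0)) with ((2 * PI * alpha + t0) + t) by ring.
  rewrite (cos_plus (2 * PI * alpha + t0) t), (sin_plus (2 * PI * alpha + t0) t). f_equal; ring.
Qed.

Lemma claim2 W I t p : (forall s, continuity_pt W s) -> 0 < I -> conv (f W) I ->
  (forall T, 0 <= T -> RInt (f W) (- T) 0 <= I) ->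
  (exists q, Lcirc W q /\ Phi t W q = p) <-> Lcirc (shift t W) p.
Proof.
  intros HW HI HC Hle.
  pose proof (claim1 W I t 0 HW HI HC Hle) as H1. rewrite rho_sol_g in H1.
  pose proof (rho_star_pos W I HC HI HW) as Hr.
  pose proof (rho_star_pos _ _ (conv_shift W I t HW HC) ltac:(pose proof (IJ_pos W I HW HI Hle t); pose proof (exp_pos (-2 * (t + W t))); nra) (cont_shift W t HW)) as Hr'.
  set (r := rho_star W) in *. set (r' := rho_star (shift t W)) in *.
  assert (Hg : 0 < gfac t W (r ^ 2)) by nra.
  split.
  - intros [[x y] [Hq <-]]. unfold Lcirc in *. cbn [fst snd] in Hq. fold r in Hq. fold r'.
    assert (Hxy : x ^ 2 + y ^ 2 = r ^ 2).
    { rewrite <- Hq. rewrite pow2_sqrt; auto. nra. }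
    rewrite Phi_eq. cbn [fst snd]. rewrite Hxy.
    rewrite <- H1. apply sq_inj. apply sqrt_pos. nra.
    rewrite pow2_sqrt by nra.
    pose proof (trig1 t).
    replace ((gfac t W (r ^ 2) * (x * cos t - y * sin t)) ^ 2 +
       (gfac t W (r ^ 2) * (x * sin t + y * cos t)) ^ 2) with
      (gfac t W (r ^ 2) ^ 2 * (x ^ 2 + y ^ 2) * (cos t ^ 2 + sin t ^ 2)) by ring.
    rewrite H, Hxy. ring.
  - destruct p as [px py]. unfold Lcirc. cbn [fst snd]. fold r'. fold r. intro Hp.
    assert (Hpq : px ^ 2 + py ^ 2 = r' ^ 2).
    { rewrite <- Hp. rewrite pow2_sqrt; auto. nra. }
    set (k := r / r').
    exists (k * (px * cos t + py * sin t), k * (- px * sin t + py * cos t)).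
    pose proof (trig1 t).
    assert (Hq : (k * (px * cos t + py * sin t)) ^ 2 + (k * (- px * sin t + py * cos t)) ^ 2 = r ^ 2).
    { replace ((k * (px * cos t + py * sin t)) ^ 2 + (k * (- px * sin t + py * cos t)) ^ 2)
        with (k ^ 2 * (px ^ 2 + py ^ 2) * (cos t ^ 2 + sin t ^ 2)) by ring.
      rewrite H, Hpq. unfold k. field. lra. }
    split.
    + unfold Lcirc. cbn [fst snd]. fold r. rewrite Hq. rewrite sqrt_pow2; lra.
    + rewrite Phi_eq, Hq.
      assert (Hgk : gfac t W (r ^ 2) * k = 1) by (unfold k; rewrite <- H1; field; lra).
      f_equal.
      * transitivity (gfac t W (r ^ 2) * k * px * (cos t ^ 2 + sin t ^ 2)); [ring|].
        rewrite Hgk, H. ring.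
      * transitivity (gfac t W (r ^ 2) * k * py * (cos t ^ 2 + sin t ^ 2)); [ring|].
        rewrite Hgk, H. ring.
Qed.

Lemma inv_close I D eps : 0 < I -> 0 < D -> Rabs (2 * I - D) < 2 * I * D * eps ->
  Rabs (/ D - / (2 * I)) < eps.
Proof.
  intros HI HD H.
  replace (/ D - / (2 * I)) with ((2 * I - D) * / (2 * I * D)) by (field; lra).
  rewrite Rabs_mult, (Rabs_right (/ (2 * I * D))).
  2: { left. apply Rinv_0_lt_compat. nra. }
  apply (Rmult_lt_reg_r (2 * I * D)). nra.
  rewrite Rmult_assoc, Rinv_l by nra. lra.
Qed.

Lemma pull_norm W t r0 x0 y0 : (forall s, continuity_pt W s) -> W 0 = 0 -> 0 <= t ->
  r0 = x0 ^ 2 + y0 ^ 2 -> 0 < r0 ->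
  fst (Phi t (shift (- t) W) (x0, y0)) ^ 2 + snd (Phi t (shift (- t) W) (x0, y0)) ^ 2
  = / (/ (exp (-2 * (- t + W (- t))) * r0) + 2 * RInt (f W) (- t) 0).
Proof.
  intros HW HW0 Ht Hr0 Hpos.
  rewrite Phi_eq. cbn [fst snd]. rewrite <- Hr0.
  set (E := exp (-2 * (- t + W (- t)))).
  set (K := RInt (f W) (- t) 0).
  assert (HK : 0 <= K) by (apply fint_nneg; auto; lra).
  assert (HE : 0 < E) by apply exp_pos.
  assert (HD : Defs.RInt (fun s => exp (2 * (s + shift (- t) W s))) 0 t = E * K).
  { change (fun s => exp (2 * (s + shift (- t) W s))) with (f (shift (- t) W)).
    rewrite (proj2 (RInt_conv _ (cont_f _ (cont_shift W (- t) HW)) _ _)).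
    rewrite (RInt_ext _ (fun s => scal E (f W (s + - t)))).
    2:{ intros x _. rewrite f_shift. reflexivity. }
    rewrite (@RInt_scal R_CompleteNormedModule (fun s => f W (s + - t))).
    2:{ apply (RInt_conv (fun s => f W (s + - t))). intro s.
      apply (continuity_pt_comp (fun s => s + - t) (f W)).
      apply continuity_pt_plus. apply continuity_pt_id. apply continuity_pt_const; intros ??; reflexivity.
      apply cont_f, HW. }
    rewrite (RInt_shift (f W) (- t) 0 t (cont_f W HW)).
    rewrite Rplus_0_l, Rplus_opp_r. reflexivity. }
  unfold gfac. rewrite HD.
  assert (HX : 0 < 1 + 2 * r0 * (E * K)) by (assert (0 <= r0 * (E * K)) by (apply Rmult_le_pos; [lra|apply Rmult_le_pos; lra]); lra).
  assert (Hex : exp (t + shift (- t) W t) ^ 2 = E).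
  { unfold shift, E. rewrite Rplus_opp_l, HW0. simpl. rewrite Rmult_1_r, <- exp_plus. f_equal. ring. }
  pose proof (trig1 t).
  set (G := exp (t + shift (- t) W t) / sqrt (1 + 2 * r0 * (E * K))).
  assert (HG : G ^ 2 = E / (1 + 2 * r0 * (E * K))).
  { unfold G. unfold Rdiv. rewrite Rpow_mult_distr, Hex, <- Rinv_pow, pow2_sqrt; [reflexivity|lra|apply Rgt_not_eq, sqrt_lt_R0; lra]. }
  transitivity (G ^ 2 * (x0 ^ 2 + y0 ^ 2) * (cos t ^ 2 + sin t ^ 2)); [ring|].
  rewrite H, HG, <- Hr0. field. split; nra.
Qed.

Lemma claim6 W I : bm_path W -> 0 < I -> conv (f W) I ->
  (forall T, 0 <= T -> RInt (f W) (- T) 0 <= I) ->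
  forall x0 y0 : R, x0 ^ 2 + y0 ^ 2 <> 0 ->
     forall eps, eps > 0 -> exists M, forall t, t >= M ->
       Rabs (fst (Phi t (shift (- t) W) (x0, y0)) ^ 2
             + snd (Phi t (shift (- t) W) (x0, y0)) ^ 2
             - rho_star W ^ 2) < eps.
Proof.
  intros HWb HI HC Hle x0 y0 Hr eps Heps.
  pose proof HWb as [HW [HW0 HWl]].
  set (r0 := x0 ^ 2 + y0 ^ 2).
  assert (Hr0 : 0 < r0) by (unfold r0 in *; nra).
  set (k1 := RInt (f W) (- (1)) 0).
  assert (Hk1 : 0 < k1) by (apply fint_pos; auto; lra).
  destruct (HWl (/2) ltac:(lra)) as [M0 HM0].
  destruct (HC (k1 * I * eps)) as [M1 HM1]. apply Rmult_lt_0_compat; [|lra]. nra.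
  set (d2 := 2 * k1 * I * eps).
  assert (Hd2 : 0 < d2). { unfold d2. assert (0 < k1 * I) by nra. nra. }
  exists (Rmax (Rmax M0 1) (Rmax M1 (/ (d2 * r0) + 1))).
  intros t Ht.
  pose proof (Rmax_l (Rmax M0 1) (Rmax M1 (/ (d2 * r0) + 1))).
  pose proof (Rmax_r (Rmax M0 1) (Rmax M1 (/ (d2 * r0) + 1))).
  pose proof (Rmax_l M0 1). pose proof (Rmax_r M0 1).
  pose proof (Rmax_l M1 (/ (d2 * r0) + 1)). pose proof (Rmax_r M1 (/ (d2 * r0) + 1)).
  rewrite (pull_norm W t r0 x0 y0 HW HW0 ltac:(lra) eq_refl Hr0).
  rewrite (rho_star_eq W I HW HC).
  replace ((/ sqrt (2 * I)) ^ 2) with (/ (2 * I)).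
  2:{ rewrite <- Rinv_pow, pow2_sqrt; [reflexivity|lra|apply Rgt_not_eq, sqrt_lt_R0; lra]. }
  set (E := exp (-2 * (- t + W (- t)))).
  set (K := RInt (f W) (- t) 0).
  assert (HK : k1 <= K) by (apply F_mono; auto; lra).
  assert (HE : t <= E).
  { assert (Rabs (W (- t)) <= / 2 * Rabs (- t)) by (apply HM0; rewrite Rabs_Ropp, (Rabs_right t); lra).
    rewrite Rabs_Ropp, (Rabs_right t) in H5 by lra. pose proof (Rle_abs (W (- t))).
    unfold E. apply Rle_trans with (exp t).
    pose proof (exp_ineq1 t ltac:(lra)). lra.
    destruct (Req_dec t (-2 * (- t + W (- t)))) as [Ee|Ee]. rewrite <- Ee; lra.
    left. apply exp_increasing. lra. }
  assert (HEp : 0 < E) by apply exp_pos.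
  set (X := / (E * r0)).
  assert (HXp : 0 < X) by (apply Rinv_0_lt_compat; nra).
  assert (HX : X < d2).
  { unfold X. apply (Rmult_lt_reg_r (E * r0)). nra. rewrite Rinv_l by nra.
    assert (t >= / (d2 * r0) + 1) by lra.
    assert (Hq : d2 * r0 * / (d2 * r0) = 1) by (field; lra).
    assert (0 < / (d2 * r0)) by (apply Rinv_0_lt_compat; nra).
    assert (d2 * r0 * t >= d2 * r0 * (/ (d2 * r0) + 1)).
    { apply Rle_ge, Rmult_le_compat_l. nra. lra. }
    assert (d2 * (E * r0) >= d2 * r0 * t) by nra. nra. }
  specialize (HM1 t ltac:(lra)).
  rewrite (proj2 (RInt_conv _ (cont_f W HW) _ _)) in HM1. fold K in HM1.
  apply inv_close; [lra|nra|].
  replace (2 * I - (X + 2 * K)) with (2 * (I - K) - X) by ring.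
  apply Rle_lt_trans with (2 * Rabs (I - K) + X).
  { eapply Rle_trans; [apply Rabs_triang|]. rewrite Rabs_Ropp, Rabs_mult, (Rabs_right 2), (Rabs_right X) by lra. lra. }
  rewrite <- Rabs_Ropp in HM1. replace (- (K - I)) with (I - K) in HM1 by ring.
  unfold d2 in HX.
  assert (2 * I * (X + 2 * K) * eps >= 2 * I * (2 * k1) * eps).
  { apply Rle_ge. apply Rmult_le_compat_r; [lra|]. apply Rmult_le_compat_l; lra. }
  lra.
Qed.

Import Defs.

Theorem mainTheorem11 (W : R -> R) (HW : bm_path W) (alpha : R)
  (Halpha : 0 <= alpha < 1) :
  (* rho(t, alpha0, rho^*(omega), omega) = rho^*(theta_t omega) *)
  (forall t alpha0, rho_sol t alpha0 (rho_star W) W = rho_star (shift t W)) /\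
  (* Phi(t, omega) L^omega = L^{theta_t omega} *)
  (forall t (p : R * R),
      (exists q, Lcirc W q /\ Phi t W q = p) <-> Lcirc (shift t W) p) /\
  (* psi is 2 pi periodic *)
  (forall t, psi alpha W (t + 2 * PI) = psi alpha W t) /\
  (* Phi(t, omega) psi^omega(0) = psi^{theta_t omega}(t) *)
  (forall t, Phi t W (psi alpha W 0) = psi alpha (shift t W) t) /\
  (* random periodic solution property: Phi_t(psi(t0)) = psi^{theta_t omega}(t + t0) *)
  (forall t t0, Phi t W (psi alpha W t0) = psi alpha (shift t W) (t + t0)) /\
  (* pullback convergence to the random circle *)
  (forall x0 y0 : R, x0 ^ 2 + y0 ^ 2 <> 0 ->
     forall eps, eps > 0 -> exists M, forall t, t >= M ->
       Rabs (fst (Phi t (shift (- t) W) (x0, y0)) ^ 2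
             + snd (Phi t (shift (- t) W) (x0, y0)) ^ 2
             - rho_star W ^ 2) < eps).
Proof.
  destruct (exists_I W HW) as [I [HI [HC Hle]]].
  pose proof HW as [HWc _].
  split; [|split; [|split; [|split; [|split]]]].
  - intros t a. apply (claim1 W I t a HWc HI HC Hle).
  - intros t p. apply (claim2 W I t p HWc HI HC Hle).
  - intro t. unfold psi.
    replace (2 * PI * alpha + (t + 2 * PI)) with ((2 * PI * alpha + t) + 2 * INR 1 * PI)
      by (simpl; ring).
    rewrite cos_period, sin_period. reflexivity.
  - intro t. rewrite (claim5 W I alpha t 0 HWc HI HC Hle), Rplus_0_r. reflexivity.
  - intros t t0. apply (claim5 W I alpha t t0 HWc HI HC Hle).
  - apply (claim6 W I HW HI HC Hle).
Qed.
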